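(* There exist universal positive constants $K_1,K_2$ such that for all integers $N,P\ge 2$, with $x=\frac{\log N}{N}+\frac{\log P}{P}$, $$\frac{\mathrm{Vol}(\mathscr B)}{\mathrm{Vol}(\mathscr B_0)}\le K_1\sqrt{x}+K_2\,x^{3/2}.$$
   Context: $\log$ is base 2. For a probability vector $(z_1,\ldots,z_I)$, $H(z_1,\ldots,z_I)=\sum_i z_i\log(1/z_i)$. Let $\mathscr B_0\subset[0,1]^3$ be the set of points $(\overline a,f_0,f_1)$ with $0<\overline a,f_0,f_1<1$ and $f_0+f_1<1$ (so $\mathrm{Vol}(\mathscr B_0)=1/2$). Given $N,P$, let $\mathscr B\subset\mathscr B_0$ be the set of points $(\overline a,f_0,f_1)\in\mathscr B_0$ with $$H(\overline a,1-\overline a)-H(f_0,f_1,1-f_0-f_1)+(f_0+f_1)\in\left(-x,\,x\right],\qquad x=\frac{\log N}{N}+\frac{\log P}{P}.$$ $\mathrm{Vol}$ denotes Lebesgue measure in $\mathbb R^3$. *)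

(* Defs.v *)
From HB Require Import structures.
From mathcomp Require Import all_boot all_order all_algebra.
From mathcomp Require Import all_classical all_reals all_analysis.
Set Implicit Arguments. Unset Strict Implicit. Unset Printing Implicit Defensive.
Import Order.TTheory GRing.Theory Num.Theory.
Import numFieldNormedType.Exports.
Local Open Scope classical_set_scope.
Local Open Scope ring_scope.

Section Defs.
Variable R : realType.

Definition log2 (t : R) : R := ln t / ln 2.

Definition entropy (z : seq R) : R := \sum_(zi <- z) zi * log2 (1 / zi).

Definition xNP (N P : nat) : R := log2 N%:R / N%:R + log2 P%:R / P%:R.

Definition B0 : set ((R * R) * R) :=
  [set p | let: ((a, f0), f1) := p in
     [/\ 0 < a < 1, 0 < f0 < 1, 0 < f1 < 1 & f0 + f1 < 1]].

Definition Bset (N P : nat) : set ((R * R) * R) :=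
  [set p | B0 p /\ let: ((a, f0), f1) := p in
     let v := entropy [:: a; 1 - a] - entropy [:: f0; f1; 1 - f0 - f1] + (f0 + f1) in
     - xNP N P < v <= xNP N P].

Definition Vol3 : set ((R * R) * R) -> \bar R :=
  ((@lebesgue_measure R \x @lebesgue_measure R) \x @lebesgue_measure R)%E.

End Defs.

(* Main.v *)
Require Import Defs.
From HB Require Import structures.
From mathcomp Require Import all_boot all_order all_algebra.
From mathcomp Require Import all_classical all_reals all_analysis.
From mathcomp Require Import measurable_realfun ring lra.
Import Order.TTheory GRing.Theory Num.Theory.
Import numFieldNormedType.Exports.
Local Open Scope classical_set_scope.
Local Open Scope ring_scope.
Section Real.
Variable R : realType.
Implicit Types z p q y t s u : R.

Definition hh z : R := z * ln z.

Lemma ln_ge1 z : 0 < z -> 1 - z^-1 <= ln z.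
Proof.
move=> z0.
have h1 : -1 < z^-1 - 1 by rewrite ltrBrDr addrC subrr invr_gt0.
have := le_ln1Dx h1.
rewrite addrC subrK lnV ?posrE // => H; lra.
Qed.

Lemma tangent_pq p q : 0 < p < 1 -> 0 < q < 1 ->
  hh (q ^+ 2) + (ln (q ^+ 2) + 1) * (p ^+ 2 - q ^+ 2) + (p ^+ 2 - q ^+ 2) ^+ 2 / 4
   <= hh (p ^+ 2).
Proof.
move=> /andP[p0 p1] /andP[q0 q1].
have E : ln (p ^+ 2) = ln (q ^+ 2) + 2 * ln (p / q).
  rewrite !lnXn // ln_div ?posrE //; rewrite !mulr2n; lra.
have W : 1 - q / p <= ln (p / q).
  by have := @ln_ge1 (p / q) (divr_gt0 p0 q0); rewrite invf_div.
have PQ : p * (q / p) = q by rewrite mulrC divfK // gt_eqF.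
rewrite /hh E.
set w := ln (p / q); set l := ln (q ^+ 2).
set r := q / p in W PQ *.
have H2 : 2 * p ^+ 2 * (1 - r) <= 2 * p ^+ 2 * w.
  by rewrite ler_pM2l // mulr_gt0 // exprn_gt0.
have : 0 <= (p - q) ^+ 2 * (4 - (p + q) ^+ 2).
  apply: mulr_ge0; first exact: sqr_ge0.
  rewrite subr_ge0; nra.
nra.
Qed.

Lemma sqrt01 y : 0 < y < 1 -> 0 < Num.sqrt y < 1.
Proof.
move=> /andP[y0 y1]; rewrite sqrtr_gt0 y0 /=.
by rewrite -sqrtr1 ltr_sqrt // ltr01.
Qed.

Lemma tangent y t : 0 < y < 1 -> 0 < t < 1 ->
  hh t + (ln t + 1) * (y - t) + (y - t) ^+ 2 / 4 <= hh y.
Proof.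
move=> hy ht.
have := tangent_pq _ _ (sqrt01 _ hy) (sqrt01 _ ht).
case/andP: hy => y0 _; case/andP: ht => t0 _.
by rewrite !sqr_sqrtr // ltW.
Qed.

Lemma hh3 s t u : 0 < s -> s < t -> t < u -> u < 1 ->
  (u - s) * hh t + (t - s) * (u - t) * (u - s) / 4 <= (u - t) * hh s + (t - s) * hh u.
Proof.
move=> s0 st tu u1.
have H1 := tangent s t ltac:(apply/andP; split; lra) ltac:(apply/andP; split; lra).
have H2 := tangent u t ltac:(apply/andP; split; lra) ltac:(apply/andP; split; lra).
have P1 : 0 <= (u - t) * (hh s - (hh t + (ln t + 1) * (s - t) + (s - t) ^+ 2 / 4)).
  by apply: mulr_ge0; lra.
have P2 : 0 <= (t - s) * (hh u - (hh t + (ln t + 1) * (u - t) + (u - t) ^+ 2 / 4)).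
  by apply: mulr_ge0; lra.
rewrite -subr_ge0.
have -> : (u - t) * hh s + (t - s) * hh u - ((u - s) * hh t + (t - s) * (u - t) * (u - s) / 4)
  = (u - t) * (hh s - (hh t + (ln t + 1) * (s - t) + (s - t) ^+ 2 / 4))
  + (t - s) * (hh u - (hh t + (ln t + 1) * (u - t) + (u - t) ^+ 2 / 4)) by field.
exact: addr_ge0.
Qed.

Lemma ent1 z : 0 < z -> z * log2 (1 / z) = - hh z / ln 2.
Proof.
move=> z0; rewrite /log2 /hh div1r lnV ?posrE //; lra.
Qed.

Lemma ln2_gt0 : 0 < ln (2 : R).
Proof. by rewrite ln_gt0 // ltr1n. Qed.

Lemma ln2_le1 : ln (2 : R) <= 1.
Proof. have := @le_ln1Dx R 1 ltac:(lra). by rewrite -[1 + 1]/2. Qed.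

Definition vfun a f0 w : R :=
  entropy [:: a; 1 - a] - entropy [:: f0; w; 1 - f0 - w] + (f0 + w).

Lemma vfunE a f0 w : 0 < f0 -> 0 < w -> 0 < 1 - f0 - w ->
  ln 2 * vfun a f0 w = ln 2 * entropy [:: a; 1 - a] + hh f0 + hh w + hh (1 - f0 - w)
     + ln 2 * (f0 + w).
Proof.
move=> f00 w0 r0; rewrite /vfun /entropy !big_cons !big_nil.
rewrite (ent1 _ f00) (ent1 _ w0) (ent1 _ r0). have := ln2_gt0 => L0. field. lra.
Qed.

Lemma sec_prop a f0 x s t u : 0 < f0 -> 0 < s -> s < t -> t < u -> f0 + u < 1 ->
  vfun a f0 s <= x -> vfun a f0 u <= x -> - x < vfun a f0 t ->
  (t - s) * (u - t) < 4 * x.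
Proof.
move=> f00 s0 st tu fu vs vu vt.
have L0 := ln2_gt0; have L1 := ln2_le1.
have Es := vfunE a f0 s f00 s0 ltac:(lra).
have Et := vfunE a f0 t f00 ltac:(lra) ltac:(lra).
have Eu := vfunE a f0 u f00 ltac:(lra) ltac:(lra).
have H1 := hh3 _ _ _ s0 st tu ltac:(lra).
have H2 := hh3 (1 - f0 - u) (1 - f0 - t) (1 - f0 - s) ltac:(lra) ltac:(lra) ltac:(lra) ltac:(lra).
set L := ln 2 in L0 L1 Es Et Eu.
set A := t - s; set B := u - t.
have A0 : 0 < A by rewrite /A; lra.
have B0 : 0 < B by rewrite /B; lra.
have key : (u - s) * (L * vfun a f0 t) + A * B * (u - s) / 2
    <= B * (L * vfun a f0 s) + A * (L * vfun a f0 u).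
  rewrite Es Et Eu.
  have e1 : 1 - f0 - s - (1 - f0 - u) = u - s by ring.
  have e2 : 1 - f0 - t - (1 - f0 - u) = u - t by ring.
  have e3 : 1 - f0 - s - (1 - f0 - t) = t - s by ring.
  rewrite e1 e2 e3 in H2.
  rewrite /A /B. nra.
have k1 : B * (L * vfun a f0 s) <= B * (L * x).
  by rewrite ler_pM2l // ler_pM2l.
have k2 : A * (L * vfun a f0 u) <= A * (L * x).
  by rewrite ler_pM2l // ler_pM2l.
have k3 : (u - s) * (L * - x) < (u - s) * (L * vfun a f0 t).
  by rewrite ltr_pM2l ?subr_gt0 ?ltr_pM2l //; lra.
have k4 : A * B * (u - s) / 2 < (u - s) * (2 * L * x).
  have -> : u - s = A + B by rewrite /A /B; ring.
  rewrite /A /B in k1 k2 k3 key *. nra.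
have k5 : A * B < 4 * L * x.
  have us : 0 < u - s by lra.
  rewrite -(ltr_pM2l us). nra.
have x0 : 0 < x.
  have : 0 < 4 * L * x by apply: lt_trans k5; exact: mulr_gt0.
  rewrite -mulrA pmulr_rgt0 //; first by rewrite pmulr_rgt0.
nra.
Qed.
End Real.
Arguments hh {R}. Arguments vfun {R}. Arguments ent1 {R}. Arguments ln2_gt0 {R}. Arguments ln2_le1 {R}. Arguments sec_prop {R}.
Section Meas.
Variable R : realType.

Lemma in_cball (c r y : R) : 0 < r -> c - r <= y <= c + r -> closed_ball c r y.
Proof.
move=> r0 H; by rewrite closed_ball_itv //=.
Qed.

Lemma leb_bound (S : set R) (d : R) : measurable S -> 0 < d ->
  (forall y, S y -> 0 < y < 1) ->
  (forall s t u, S s -> S t -> S u -> s < t -> t < u -> (t - s) * (u - t) < d ^+ 2) ->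
  (lebesgue_measure S <= (2 * d)%:E)%E.
Proof.
move=> mS d0 S01 Hq.
have [[t0 St0]|nS] := pselect (exists t, S t); last first.
  have -> : S = set0 by apply/seteqP; split => y // Sy; apply: nS; exists y.
  by rewrite measure0 lee_fin; lra.
have hinf : has_inf S.
  split; first by exists t0.
  by exists 0 => y /S01 /andP[/ltW].
have hsup : has_sup S.
  split; first by exists t0.
  by exists 1 => y /S01 /andP[_ /ltW].
set al := inf S; set be := sup S.
have r0 : 0 < d / 2 by lra.
have cov : S `<=` [set` `[al, al + d]] `|` [set` `[be - d, be]].
  move=> t St.
  have a_t : al <= t by exact: ge_inf hinf.2 t St.
  have t_b : t <= be by exact: sup_upper_bound.
  have [h1|h1] := lerP t (al + d).
    by left; rewrite /= in_itv /=; apply/andP; split; lra.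
  have [h2|h2] := lerP (be - d) t.
    by right; rewrite /= in_itv /=; apply/andP; split; lra.
  have [s Ss hs] := inf_adherent (eps := t - d - al) ltac:(lra) hinf.
  have [u Su hu] := sup_adherent (eps := be - (t + d)) ltac:(lra) hsup.
  have := Hq s t u Ss St Su ltac:(rewrite -/al in hs; lra) ltac:(rewrite -/be in hu; lra).
  rewrite -/al -/be in hs hu.
  have : d ^+ 2 < (t - s) * (u - t).
    rewrite expr2; apply: ltr_pM; lra.
  lra.
have mU : measurable ([set` `[al, al + d]] `|` [set` `[be - d, be]]).
  by apply: measurableU; apply: measurable_itv.
have := @le_measure _ _ _ (@lebesgue_measure R) _ _ (mem_set mS) (mem_set mU) cov.
move=> /le_trans; apply.
have e1 : (lebesgue_measure ([set` `[al, (al + d)%R]] : set R) = d%:E)%E.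
  rewrite lebesgue_measure_itv /= lte_fin ifT; last lra.
  by rewrite -EFinD; congr (_%:E); ring.
have e2 : (lebesgue_measure ([set` `[(be - d)%R, be]] : set R) = d%:E)%E.
  rewrite lebesgue_measure_itv /= lte_fin ifT; last lra.
  by rewrite -EFinD; congr (_%:E); ring.
have fin : (lebesgue_measure ([set` `[al, (al + d)%R]] : set R) +
   lebesgue_measure ([set` `[(be - d)%R, be]] : set R) <= (2 * d)%R%:E)%E.
  by rewrite e1 e2 -EFinD lee_fin; lra.
exact: le_trans (measureU2 lebesgue_measure (measurable_itv _) (measurable_itv _)) fin.
Qed.
End Meas.
Section Meas3.
Variable R : realType.
Local Notation T3 := ((R * R) * R)%type.

Lemma vfun_vv (a f0 f1 : R) : 0 < a < 1 -> 0 < f0 -> 0 < f1 -> 0 < 1 - f0 - f1 ->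
  vfun a f0 f1 = (- hh a - hh (1 - a) + hh f0 + hh f1 + hh (1 - f0 - f1)) / ln 2 + (f0 + f1).
Proof.
move=> /andP[a0 a1] f00 f10 r0.
rewrite /vfun /entropy !big_cons !big_nil.
have a0' : 0 < 1 - a by lra.
rewrite (ent1 _ a0) (ent1 _ a0') (ent1 _ f00) (ent1 _ f10) (ent1 _ r0).
have := @ln2_gt0 R => L0. field. lra.
Qed.

Definition vv (p : T3) : R :=
  (- hh p.1.1 - hh (1 - p.1.1) + hh p.1.2 + hh p.2 + hh (1 - p.1.2 - p.2)) / ln 2
  + (p.1.2 + p.2).

Lemma mhh : measurable_fun setT (@hh R).
Proof.
have := measurable_funM (f := id) (g := @ln R) (@measurable_id _ _ setT) (@measurable_ln R).
by [].
Qed.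

Lemma m11 : measurable_fun setT (fun p : T3 => p.1.1).
Proof. exact: measurableT_comp measurable_fst measurable_fst. Qed.
Lemma m12 : measurable_fun setT (fun p : T3 => p.1.2).
Proof. exact: measurableT_comp measurable_snd measurable_fst. Qed.
Lemma m2 : measurable_fun setT (fun p : T3 => p.2).
Proof. exact: measurable_snd. Qed.

Lemma mvv : measurable_fun setT vv.
Proof.
rewrite /vv.
apply: measurable_funD; last exact: measurable_funD m12 m2.
apply: measurable_funM; last exact: measurable_cst.
apply: measurable_funD; last first.
  apply: measurableT_comp mhh _.
  exact: measurable_funB (measurable_funB (measurable_cst _) m12) m2.
apply: measurable_funD; last exact: measurableT_comp mhh m2.
apply: measurable_funD; last exact: measurableT_comp mhh m12.
apply: measurable_funB.
  apply: (measurableT_comp (f := fun z : R => - z)); first exact: oppr_measurable.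
  exact: measurableT_comp mhh m11.
apply: measurableT_comp mhh _.
exact: measurable_funB (measurable_cst _) m11.
Qed.

Definition hp (p : T3) : R := p.1.2 + p.2.

Lemma B0E : @B0 R = (([set` `]0, 1[] `*` [set` `]0, 1[]) `*` [set` `]0, 1[]) `&`
   (hp @^-1` [set` `]-oo, 1[]).
Proof.
apply/seteqP; split => -[[a f0] f1] /=; rewrite /hp /= !in_itv /= ?andbT.
  by case=> -> -> -> ->.
by move=> [[[-> ->] ->] ->].
Qed.

Lemma mB0 : measurable (@B0 R).
Proof.
rewrite B0E; apply: measurableI.
  by apply: measurableX; [apply: measurableX|]; apply: measurable_itv.
rewrite -[X in measurable X]setTI.
by apply: (measurable_funD m12 m2) => //; exact: measurable_itv.
Qed.

Lemma BsetE N P : @Bset R N P = @B0 R `&` (vv @^-1` [set` `]- xNP R N P, xNP R N P]]).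
Proof.
have E : forall a f0 f1, @B0 R ((a, f0), f1) -> vv ((a, f0), f1) = vfun a f0 f1.
  move=> a f0 f1 [ha hf0 hf1 hs].
  have h0 : 0 < f0 by case/andP: hf0.
  have h1 : 0 < f1 by case/andP: hf1.
  have h2 : 0 < 1 - f0 - f1 by lra.
  by rewrite (vfun_vv _ _ _ ha h0 h1 h2) /vv.
apply/seteqP; split => -[[a f0] f1] /=.
  move=> [hB hv]; split => //; rewrite /= in_itv /= E //.
move=> [hB]; rewrite /= in_itv /= E // => hv; split => //.
Qed.

Lemma mBset N P : measurable (@Bset R N P).
Proof.
rewrite BsetE; apply: measurableI; first exact: mB0.
rewrite -[X in measurable X]setTI.
by apply: mvv => //; exact: measurable_itv.
Qed.
End Meas3.
Section Final.
Variable R : realType.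
Local Notation T3 := ((R * R) * R)%type.

Lemma xpos N P : (2 <= N)%N -> (2 <= P)%N -> 0 < xNP R N P.
Proof.
move=> hN hP; rewrite /xNP /log2.
have L0 := @ln2_gt0 R.
have pos : forall n : nat, (2 <= n)%N -> 0 < ln (n%:R : R) / ln 2 / n%:R.
  move=> n hn; apply: divr_gt0; last by rewrite ltr0n; case: n hn.
  apply: divr_gt0 => //; apply: ln_gt0.
  by rewrite ltr1n.
exact: addr_gt0 (pos _ hN) (pos _ hP).
Qed.

Definition box : set (R * R) := [set` `]0, 1[] `*` [set` `]0, 1[].

Lemma sec_bound N P (p : R * R) : (2 <= N)%N -> (2 <= P)%N ->
  (lebesgue_measure (xsection (@Bset R N P) p) <=
   ((4 * Num.sqrt (xNP R N P)) * \1_box p)%:E)%E.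
Proof.
move=> hN hP; set x := xNP R N P.
have x0 : 0 < x := xpos _ _ hN hP.
case: p => a f0.
have [inb|notb] := pselect (box (a, f0)); last first.
  have -> : xsection (@Bset R N P) (a, f0) = set0.
    apply/seteqP; split => y //; rewrite /xsection /= in_setE.
    move=> [[ha hf0 _ _] _]; apply: notb; rewrite /box /= !in_itv /=.
    by split.
  by rewrite measure0 lee_fin mulr_ge0 // ?mulr_ge0 ?sqrtr_ge0.
rewrite indicE mem_set // mulr1.
have hd : 0 < 2 * Num.sqrt x by rewrite mulr_gt0 // sqrtr_gt0.
rewrite (_ : 4 * Num.sqrt x = 2 * (2 * Num.sqrt x)); last by ring.
apply: leb_bound => //.
- exact: measurable_xsection (mBset R N P).
- move=> y; rewrite /xsection /= in_setE => -[[_ _ hy _] _]; exact: hy.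
- move=> s t u; rewrite /xsection /= !in_setE.
  move=> [[ha hf0 hs _] vs] [_ vt] [[_ _ _ hu] vu] st tu.
  rewrite exprMn sqr_sqrtr ?(ltW x0) //.
  have f00 : 0 < f0 by case/andP: hf0.
  have s0 : 0 < s by case/andP: hs.
  have := sec_prop a f0 x s t u f00 s0 st tu hu.
  case/andP: vs => _ vs'; case/andP: vu => _ vu'; case/andP: vt => vt' _.
  move=> /(_ vs' vu' vt') H; rewrite (_ : 2 ^+ 2 = 4) //; ring.
Qed.
End Final.
Section Final2.
Variable R : realType.
Local Notation T3 := ((R * R) * R)%type.
Local Open Scope ereal_scope.

Lemma box_meas : measurable (box R).
Proof. by apply: measurableX; apply: measurable_itv. Qed.

Lemma box_meas' : @measurable _ (measurableTypeR R * measurableTypeR R)%type (box R).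
Proof. exact: box_meas. Qed.

Lemma mBset' N P : @measurable _ ((measurableTypeR R * measurableTypeR R) * measurableTypeR R)%type (@Bset R N P).
Proof. exact: mBset. Qed.

Lemma leb01 : lebesgue_measure ([set` `]0%R, 1%R[] : set R) = 1.
Proof. by rewrite lebesgue_measure_itv /= lte_fin ltr01 /= oppr0 adde0. Qed.

Lemma m12box : ((@lebesgue_measure R) \x (@lebesgue_measure R)) (box R) = 1.
Proof.
rewrite /box product_measure1E; [|exact: measurable_itv|exact: measurable_itv].
have helper : forall a b : \bar R, a = 1 -> b = 1 -> a * b = 1.
  by move=> a b -> ->; rewrite mule1.
by apply: helper; exact: leb01.
Qed.

Lemma VolB N P : (2 <= N)%N -> (2 <= P)%N ->
  Vol3 (@Bset R N P) <= (4 * Num.sqrt (xNP R N P))%:E.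
Proof.
move=> hN hP.
set x := xNP R N P.
have -> : Vol3 (@Bset R N P) = \int[((@lebesgue_measure R) \x (@lebesgue_measure R))%E]_p (lebesgue_measure \o xsection (@Bset R N P)) p by [].
have step : \int[((@lebesgue_measure R) \x (@lebesgue_measure R))%E]_p (lebesgue_measure \o xsection (@Bset R N P)) p <=
    \int[((@lebesgue_measure R) \x (@lebesgue_measure R))%E]_p (((4 * Num.sqrt x) * \1_(box R) p)%:E).
  apply: ge0_le_integral => //.
  - exact: measurable_fun_xsection (mBset' N P).
  - apply/measurable_EFinP; apply: measurable_funM; first exact: measurable_cst.
    exact: measurable_indic box_meas'.
  - by move=> p _; exact: sec_bound.
apply: (le_trans step).
have Hk : (4 * Num.sqrt x < 0)%R -> (fun _ : R => box R) (4 * Num.sqrt x)%R = set0.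
  move=> k0; exfalso; move: k0; apply/negP; rewrite -leNgt.
  by apply: mulr_ge0 => //; apply: sqrtr_ge0.
have e1 : \int[((@lebesgue_measure R) \x (@lebesgue_measure R))%E]_p (((4 * Num.sqrt x) * \1_(box R) p)%:E)
   = (4 * Num.sqrt x)%:E * \int[((@lebesgue_measure R) \x (@lebesgue_measure R))%E]_p ((\1_(box R) p)%:E).
  have := (integralZl_indic (m := ((@lebesgue_measure R) \x (@lebesgue_measure R))%E) measurableT (fun _ => box R) _ Hk box_meas').
  by move=> ->.
have e2 : \int[((@lebesgue_measure R) \x (@lebesgue_measure R))%E]_p ((\1_(box R) p)%:E)
   = ((@lebesgue_measure R) \x (@lebesgue_measure R))%E (box R `&` setT).
  exact: (integral_indic _ measurableT box_meas').
rewrite e1 e2 setIT.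
have helper2 : forall a b : \bar R, b = 1 -> a * b <= a.
  by move=> a b ->; rewrite mule1.
by apply: helper2; exact: m12box.
Qed.
End Final2.
Section Final3.
Variable R : realType.
Local Open Scope ereal_scope.

Lemma leb0h : lebesgue_measure ([set` `]0%R, (1/2)%R[] : set R) = (1/2)%R%:E.
Proof. rewrite lebesgue_measure_itv /= lte_fin ifT; last lra. by rewrite -EFinD subr0. Qed.

Lemma mB0' : @measurable _ ((measurableTypeR R * measurableTypeR R) * measurableTypeR R)%type (@B0 R).
Proof. exact: mB0. Qed.

Lemma VolB0 : (1/4)%R%:E <= Vol3 (@B0 R) <= 1.
Proof.
set I1 := [set` `]0%R, 1%R[] : set R.
set Ih := [set` `]0%R, (1/2)%R[] : set R.
have mI1 : @measurable _ (measurableTypeR R) I1 by exact: measurable_itv.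
have mIh : @measurable _ (measurableTypeR R) Ih by exact: measurable_itv.
have mbig : @measurable _ ((measurableTypeR R * measurableTypeR R) * measurableTypeR R)%type
   ((I1 `*` I1) `*` I1) by apply: measurableX => //; exact: measurableX.
have msmall : @measurable _ ((measurableTypeR R * measurableTypeR R) * measurableTypeR R)%type
   ((I1 `*` Ih) `*` Ih) by apply: measurableX => //; exact: measurableX.
have Vbig : Vol3 ((I1 `*` I1) `*` I1) = 1.
  have h1 : Vol3 ((I1 `*` I1) `*` I1) = ((@lebesgue_measure R) \x (@lebesgue_measure R)) (I1 `*` I1) * lebesgue_measure I1.
    by apply: product_measure1E => //; exact: measurableX.
  have h2 : ((@lebesgue_measure R) \x (@lebesgue_measure R)) (I1 `*` I1) = lebesgue_measure I1 * lebesgue_measure I1.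
    by apply: product_measure1E.
  have e : lebesgue_measure I1 = 1 by exact: leb01.
  by rewrite h1 h2 e !mule1.
have Vsmall : Vol3 ((I1 `*` Ih) `*` Ih) = (1/4)%R%:E.
  have h1 : Vol3 ((I1 `*` Ih) `*` Ih) = ((@lebesgue_measure R) \x (@lebesgue_measure R)) (I1 `*` Ih) * lebesgue_measure Ih.
    by apply: product_measure1E => //; exact: measurableX.
  have h2 : ((@lebesgue_measure R) \x (@lebesgue_measure R)) (I1 `*` Ih) = lebesgue_measure I1 * lebesgue_measure Ih.
    by apply: product_measure1E.
  rewrite h1 h2.
  have e : lebesgue_measure I1 = 1 by exact: leb01.
  have e' : lebesgue_measure Ih = (1/2)%R%:E by exact: leb0h.
  by rewrite e e' mul1e -EFinM; congr (_%:E); field.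
apply/andP; split.
  rewrite -Vsmall.
  have sub : (I1 `*` Ih) `*` Ih `<=` @B0 R.
    move=> [[a f0] f1] /= [[]]; rewrite /I1 /Ih /= !in_itv /= => ha hf0 hf1.
    move: hf0 hf1 => /andP[? ?] /andP[? ?].
    split => //; try (apply/andP; split); lra.
  exact: (@le_measure _ _ _ (((@lebesgue_measure R) \x (@lebesgue_measure R)) \x (@lebesgue_measure R))%E _ _ (mem_set msmall) (mem_set mB0') sub).
rewrite -Vbig.
have sub : @B0 R `<=` (I1 `*` I1) `*` I1.
  move=> [[a f0] f1] [ha hf0 hf1 _] /=; rewrite /I1 /= !in_itv /=.
  by split; [split|].
exact: (@le_measure _ _ _ (((@lebesgue_measure R) \x (@lebesgue_measure R)) \x (@lebesgue_measure R))%E _ _ (mem_set mB0') (mem_set mbig) sub).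
Qed.
End Final3.

Theorem mainTheorem6 (R : realType) :
  exists K1 K2 : R, 0 < K1 /\ 0 < K2 /\
    forall N P : nat, (2 <= N)%N -> (2 <= P)%N ->
      fine (Vol3 (@Bset R N P)) / fine (Vol3 (@B0 R)) <=
        K1 * (@xNP R N P) `^ (1 / 2) + K2 * (@xNP R N P) `^ (3 / 2).
Proof.
exists 16, 1; split; first lra; split; first lra.
move=> N P hN hP.
have x0 := xpos R N P hN hP.
set x := xNP R N P in x0 *.
have hB := VolB R N P hN hP.
have hB0 := VolB0 R.
have hB1 : (0 <= Vol3 (@Bset R N P))%E by apply: integral_ge0 => p _; exact: measure_ge0.
rewrite -/x in hB.
have finB : Vol3 (@Bset R N P) \is a fin_num.
  by rewrite ge0_fin_numE // (le_lt_trans hB) // ltry.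
have finB0 : Vol3 (@B0 R) \is a fin_num.
  case/andP: hB0 => h1 h2.
  by rewrite ge0_fin_numE ?(le_lt_trans h2) ?ltry // (le_trans _ h1) // lee_fin; lra.
move: hB hB1 hB0.
rewrite -(fineK finB) -(fineK finB0).
set r := fine (Vol3 (@Bset R N P)); set r0 := fine (Vol3 (@B0 R)).
move=> hr hr0.
rewrite !lee_fin => /andP[r0l r0u].
rewrite lee_fin in hr; rewrite lee_fin in hr0.
have s0 := sqrtr_ge0 x.
rewrite div1r powR12_sqrt ?(ltW x0) //.
have p0 := powR_ge0 x (3 / 2).
have r0p : 0 < r0 by lra.
rewrite ler_pdivrMr //.
rewrite /=.
have h1 : 0 <= Num.sqrt x * (r0 - 1/4) by apply: mulr_ge0; lra.
have h2 : 0 <= x `^ (3 / 2) * r0 by apply: mulr_ge0; lra.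
nra.
Qed.
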